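(* Let $\Phi=(A;A^*;\{E_i\}_{i=0}^d;\{E^*_i\}_{i=0}^d)$ be a Leonard system in $\mathcal A$, with $x_i$ and $p_i$ as defined below. Then $x_1x_2\cdots x_i\neq 0$ and $$E^*_i=\frac{p_i(A)\,E^*_0\,p_i(A)}{x_1x_2\cdots x_i}\qquad(0\le i\le d).$$
   Context: Let $\mathbb K$ be a field, $d\ge 0$ an integer, and $\mathcal A$ a $\mathbb K$-algebra isomorphic to the full matrix algebra $\mathrm{Mat}_{d+1}(\mathbb K)$; $I$ is its identity. An element of $\mathcal A$ is multiplicity-free if it has $d+1$ mutually distinct eigenvalues in $\mathbb K$. If $A$ is multiplicity-free with eigenvalues $\theta_0,\dots,\theta_d$, the primitive idempotent of $A$ associated with $\theta_i$ is $E_i=\prod_{j\ne i}(A-\theta_jI)/(\theta_i-\theta_j)$. A Leonard system in $\mathcal A$ is a sequence $\Phi=(A;A^*;\{E_i\}_{i=0}^d;\{E^*_i\}_{i=0}^d)$ such that (i) $A,A^*\in\mathcal A$ are multiplicity-free; (ii) $E_0,\dots,E_d$ is an ordering of the primitive idempotents of $A$; (iii) $E^*_0,\dots,E^*_d$ is an ordering of the primitive idempotents of $A^*$; (iv) $E_iA^*E_j=0$ if $|i-j|>1$ and $E_iA^*E_j\ne0$ if $|i-j|=1$ ($0\le i,j\le d$); (v) $E^*_iAE^*_j=0$ if $|i-j|>1$ and $E^*_iAE^*_j\ne0$ if $|i-j|=1$ ($0\le i,j\le d$). Here $A^*$ is merely notation (not an adjoint). Define $a_i=\mathrm{tr}(E^*_iA)$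 ($0\le i\le d$), $x_i=\mathrm{tr}(E^*_iAE^*_{i-1}A)$ ($1\le i\le d$), $x_0=0$. Define polynomials $p_0,\dots,p_{d+1}\in\mathbb K[\lambda]$ by $p_{-1}=0$, $p_0=1$, and $\lambda p_i=p_{i+1}+a_ip_i+x_ip_{i-1}$ for $0\le i\le d$. The empty product $x_1\cdots x_0$ equals $1$. *)

(* Defs.v *)
(* The algebra \mathcal A is taken to be Mat_{d+1}(K) itself. *)
From HB Require Import structures.
From mathcomp Require Import all_boot all_order all_algebra.
Set Implicit Arguments. Unset Strict Implicit. Unset Printing Implicit Defensive.
Import GRing.Theory.
Local Open Scope ring_scope.

Section LS.
Variables (K : fieldType) (d : nat).
Local Notation n := d.+1.

Definition prim_idem (A : 'M[K]_n) (th : 'I_n -> K) (i : 'I_n) : 'M[K]_n :=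
  \prod_(j < n | j != i) ((th i - th j)^-1 *: (A - (th j)%:M)).

Definition idem_ordering (A : 'M[K]_n) (E : 'I_n -> 'M[K]_n) : Prop :=
  exists th : 'I_n -> K,
    injective th /\ (forall i, eigenvalue A (th i)) /\
    (forall i, E i = prim_idem A th i).

Definition multiplicity_free (A : 'M[K]_n) : Prop :=
  exists th : 'I_n -> K, injective th /\ (forall i, eigenvalue A (th i)).

Definition tridiag_cond (E : 'I_n -> 'M[K]_n) (B : 'M[K]_n) : Prop :=
  forall i j : 'I_n,
    (((i.+1 < j)%N || (j.+1 < i)%N) -> E i *m B *m E j = 0) /\
    (((i.+1 == j) || (j.+1 == i)) -> E i *m B *m E j != 0).

Definition leonard_system (A As : 'M[K]_n) (E Es : 'I_n -> 'M[K]_n) : Prop :=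
  multiplicity_free A /\ multiplicity_free As /\
  idem_ordering A E /\ idem_ordering As Es /\
  tridiag_cond E As /\ tridiag_cond Es A.

Definition LS_a (A : 'M[K]_n) (Es : 'I_n -> 'M[K]_n) (i : nat) : K :=
  \tr (Es (inord i) *m A).

Definition LS_x (A : 'M[K]_n) (Es : 'I_n -> 'M[K]_n) (i : nat) : K :=
  match i with
  | 0 => 0
  | i'.+1 => \tr (Es (inord i) *m A *m Es (inord i') *m A)
  end.

(* pair (p_{i-1}, p_i) from the recurrence lambda p_i = p_{i+1} + a_i p_i + x_i p_{i-1} *)
Fixpoint ppair (a x : nat -> K) (i : nat) : {poly K} * {poly K} :=
  match i with
  | 0 => (0, 1)
  | i'.+1 => let pr := ppair a x i' in
             (pr.2, ('X - (a i')%:P) * pr.2 - x i' *: pr.1)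
  end.

Definition LS_p (A : 'M[K]_n) (Es : 'I_n -> 'M[K]_n) (i : nat) : {poly K} :=
  (ppair (LS_a A Es) (LS_x A Es) i).2.

End LS.

(* Main.v *)
Require Import Defs.
From HB Require Import structures.
From mathcomp Require Import all_boot all_order all_algebra zify.
Import GRing.Theory.
Local Open Scope ring_scope.

Section Idem.
Variables (K : fieldType) (d : nat).
Local Notation n := d.+1.

Lemma mul_horner_eig [m : nat] [B : 'M[K]_n] [E : 'M[K]_(m,n)] [t : K] :
  E *m B = t *: E -> forall p, E *m horner_mx B p = p.[t] *: E.
Proof.
move=> EB; elim/poly_ind => [|p c IH].
  by rewrite rmorph0 mulmx0 horner0 scale0r.
rewrite rmorphD rmorphM /= horner_mx_X horner_mx_C -mulmxE mulmxDr mulmxA IH.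
by rewrite -scalemxAl EB mul_mx_scalar scalerA hornerMXaddC scalerDl.
Qed.

Variables (B : 'M[K]_n) (th : 'I_n -> K).
Hypothesis thinj : injective th.
Hypothesis theig : forall i, eigenvalue B (th i).

Definition Lp (i : 'I_n) : {poly K} :=
  \prod_(j < n | j != i) ((th i - th j)^-1 *: ('X - (th j)%:P)).

Lemma prim_idemE i : prim_idem B th i = horner_mx B (Lp i).
Proof.
rewrite /prim_idem /Lp rmorph_prod; apply: eq_bigr => j _ /=.
by rewrite horner_mxZ rmorphB /= horner_mx_X horner_mx_C.
Qed.

Lemma Lp_eval i k : (Lp i).[th k] = (i == k)%:R.
Proof.
rewrite /Lp horner_prod; case: eqP => [<-|/eqP ik].
  apply: big1 => j ji; rewrite hornerZ hornerXsubC mulVf // subr_eq0.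
  by apply/eqP => /thinj /eqP; rewrite eq_sym (negbTE ji).
rewrite (bigD1 k) 1?eq_sym //= hornerZ hornerXsubC subrr mulr0 mul0r //.
Qed.

Definition rs := [seq th k | k <- enum 'I_n].

Lemma rs_uniq : uniq_roots rs.
Proof. by rewrite uniq_rootsE map_inj_uniq ?enum_uniq. Qed.

Lemma horner_roots0 q : (forall k, root q (th k)) -> horner_mx B q = 0.
Proof.
have dvd q' : (forall k, root q' (th k)) -> \prod_(z <- rs) ('X - z%:P) %| q'.
  move=> rq; apply: uniq_roots_dvdp rs_uniq.
  by apply/allP => z /mapP [k _ ->].
move=> rq; have /dvdpP [r ->] := dvd _ rq.
have hc : \prod_(z <- rs) ('X - z%:P) %| char_poly B.
  by apply: dvd => k; rewrite -eigenvalue_root_char.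
have : (\prod_(z <- rs) ('X - z%:P) %= char_poly B).
  by rewrite -dvdp_size_eqp // size_prod_XsubC size_char_poly size_map size_enum_ord.
case/andP => _ /dvdpP [r' ->].
by rewrite !rmorphM /= Cayley_Hamilton !mulr0.
Qed.

Lemma idem_eig i : prim_idem B th i *m B = th i *: prim_idem B th i.
Proof.
apply/eqP; rewrite -subr_eq0 -mul_mx_scalar -mulmxBr prim_idemE.
have -> : B - (th i)%:M = horner_mx B ('X - (th i)%:P).
  by rewrite rmorphB /= horner_mx_X horner_mx_C.
rewrite mulmxE -rmorphM; apply/eqP/horner_roots0 => k.
rewrite /root hornerM hornerXsubC Lp_eval; have [->|ik] := eqVneq i k.
  by rewrite subrr mulr0.
by rewrite mul0r.
Qed.

Lemma idem_mul i j : prim_idem B th i *m prim_idem B th j =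
  if i == j then prim_idem B th i else 0.
Proof.
rewrite [prim_idem B th j]prim_idemE (mul_horner_eig (idem_eig i)) Lp_eval.
by rewrite eq_sym; case: eqP => _; rewrite ?scale1r ?scale0r.
Qed.

Lemma idem_sum : \sum_i prim_idem B th i = 1.
Proof.
apply/eqP; rewrite -subr_eq0.
have -> : \sum_i prim_idem B th i - 1 = horner_mx B (\sum_i Lp i - 1).
  by rewrite rmorphB rmorph_sum rmorph1 /=; congr (_ - _); apply: eq_bigr => i _; rewrite prim_idemE.
apply/eqP/horner_roots0 => k.
rewrite /root hornerD hornerN hornerC horner_sum (bigD1 k) //= big1.
  by rewrite Lp_eval eqxx addr0 subrr.
by move=> j /negbTE jk; rewrite Lp_eval jk.
Qed.

Lemma idem_neq0 i : prim_idem B th i != 0.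
Proof.
have /eigenvalueP [v vB vn0] := theig i.
apply: contraNneq vn0 => E0.
have := mul_horner_eig vB (Lp i); rewrite -prim_idemE E0 mulmx0 Lp_eval eqxx scale1r.
by move <-.
Qed.

Lemma idem_rank i : \rank (prim_idem B th i) = 1%N.
Proof.
apply/eqP; rewrite eqn_leq lt0n mxrank_eq0 idem_neq0 andbT.
have sE : (prim_idem B th i <= eigenspace B (th i))%MS by apply/eigenspaceP/idem_eig.
apply: leq_trans (mxrankS sE) _.
have := mxdirect_sum_eigenspace B (P := predT) (a_ := th) (in2W thinj).
rewrite mxdirectE /= => /eqP hr.
have hle := rank_leq_col (\sum_(j | predT j) eigenspace B (th j))%MS.
rewrite hr (bigD1 i) //= in hle.
have : (n.-1 <= \sum_(j | j != i) \rank (eigenspace B (th j)))%N.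
  apply: (@leq_trans (\sum_(j | j != i) 1%N)).
    by rewrite sum1_card cardC1 card_ord.
  apply: leq_sum => j _.
  by rewrite lt0n mxrank_eq0; apply: theig.
move=> h; have h2 := leq_trans (leq_add (leqnn (\rank (eigenspace B (th i)))) h) hle.
by rewrite -(leq_add2r d) add1n.
Qed.

End Idem.
Section Fac.
Variables (K : fieldType) (d : nat).
Local Notation n := d.+1.

Lemma mx11_mid (u : 'cV[K]_n) (s : 'M[K]_1) (r : 'rV[K]_n) :
  u *m s *m r = s 0 0 *: (u *m r).
Proof. by rewrite {1}[s]mx11_scalar mul_mx_scalar scalemxAl. Qed.

Lemma tr11 (s : 'M[K]_1) : \tr s = s 0 0.
Proof. by rewrite /mxtrace big_ord1. Qed.

Lemma rank1_fac (E : 'M[K]_n) : E *m E = E -> \rank E = 1%N ->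
  exists u : 'cV[K]_n, exists r : 'rV[K]_n, E = u *m r /\ r *m u = 1%:M.
Proof.
move=> EE rk; have := mulmx_base E; move: (col_base E) (row_base E).
rewrite rk => c r h; exists c, r; split => //.
have En0 : E != 0 by rewrite -mxrank_eq0 rk.
rewrite [r *m c]mx11_scalar; congr (_%:M).
move: EE; rewrite -h -mulmxA (mulmxA r) mulmxA mx11_mid => /eqP.
rewrite -subr_eq0 -{2}[c *m r]scale1r -scalerBl scaler_eq0 h (negbTE En0) orbF.
by rewrite subr_eq0 => /eqP.
Qed.

Lemma fac_r1 (E X : 'M[K]_n) (u : 'cV[K]_n) (r : 'rV[K]_n) : E = u *m r -> r *m u = 1%:M ->
  E *m X *m E = \tr (E *m X) *: E.
Proof.
move=> -> ru.
have -> : u *m r *m X *m (u *m r) = u *m (r *m X *m u) *m r by rewrite !mulmxA.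
rewrite mx11_mid; congr (_ *: _); by rewrite -[u *m r *m X]mulmxA mxtrace_mulC tr11.
Qed.

Lemma fac_xnz (E F X : 'M[K]_n) (u u' : 'cV[K]_n) (r r' : 'rV[K]_n) : E = u *m r -> r *m u = 1%:M ->
  F = u' *m r' -> r' *m u' = 1%:M ->
  E *m X *m F != 0 -> F *m X *m E != 0 -> \tr (E *m X *m F *m X) != 0.
Proof.
move=> -> ru -> ru' h1 h2.
have e1 : u *m r *m X *m (u' *m r') = (r *m X *m u') 0 0 *: (u *m r').
  by rewrite -mx11_mid !mulmxA.
have e2 : u' *m r' *m X *m (u *m r) = (r' *m X *m u) 0 0 *: (u' *m r).
  by rewrite -mx11_mid !mulmxA.
rewrite e1 in h1 *; rewrite e2 in h2.
rewrite -scalemxAl mxtraceZ -[u *m r' *m X]mulmxA mxtrace_mulC tr11.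
rewrite mulf_neq0 //.
  by apply: contraNneq h1 => ->; rewrite scale0r.
by apply: contraNneq h2 => ->; rewrite scale0r.
Qed.

End Fac.
Section Abstract.
Variables (K : fieldType) (d : nat).
Local Notation n := d.+1.
Variables (A : 'M[K]_n) (Ez : nat -> 'M[K]_n).
Hypothesis EzE : forall j k, Ez j *m Ez k = if j == k then Ez k else 0.
Hypothesis Ezsum : forall N, (n <= N)%N -> \sum_(j < N) Ez j = 1%:M.
Hypothesis Eztri : forall j k, (k.+1 < j)%N || (j.+1 < k)%N -> Ez j *m A *m Ez k = 0.
Hypothesis Ezr1 : forall k X, Ez k *m X *m Ez k = \tr (Ez k *m X) *: Ez k.

Fixpoint vv k := if k is k'.+1 then Ez k *m A *m vv k' else Ez 0.
Fixpoint ww k := if k is k'.+1 then ww k' *m A *m Ez k else Ez 0.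
Definition aa k := \tr (Ez k *m A).
Definition xx k := if k is k'.+1 then \tr (Ez k *m A *m Ez k' *m A) else 0.

Lemma sum3 (F : nat -> 'M[K]_n) k N : (k.+2 <= N)%N ->
  (forall j, (k.+1 < j)%N || (j.+1 < k)%N -> F j = 0) ->
  \sum_(j < N) F j = F k.+1 + F k + (if k is k'.+1 then F k' else 0).
Proof.
move=> kN hF; rewrite -(big_mkord xpredT) (@big_cat_nat _ _ _ k.+2) //=.
have -> : \sum_(k.+2 <= j < N) F j = 0.
  by rewrite big_nat_cond big1 // => j; rewrite andbT => /andP[hj _]; apply: hF; rewrite hj.
rewrite addr0.
rewrite !big_nat_recr //= [RHS]addrC [F k.+1 + F k]addrC addrA; congr (_ + _ + _).
case: k {kN} hF => [|k'] hF; first by rewrite big_geq.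
rewrite big_nat_recr //= big_nat_cond big1 ?add0r //.
by move=> j; rewrite andbT => /andP[_ hj]; apply: hF; rewrite ltnS hj orbT.
Qed.

Lemma AEz k : A *m Ez k = Ez k.+1 *m A *m Ez k + Ez k *m A *m Ez k +
   (if k is k'.+1 then Ez k' *m A *m Ez k else 0).
Proof.
rewrite -{1}(mul1mx (A *m Ez k)) -(Ezsum _ (leq_addr k.+2 n)).
rewrite mulmx_suml; under eq_bigr do rewrite mulmxA.
rewrite (sum3 (fun j => Ez j *m A *m Ez k) k) //; first lia.
by move=> j hj; apply: Eztri.
Qed.

Lemma EzA k : Ez k *m A = Ez k *m A *m Ez k.+1 + Ez k *m A *m Ez k +
   (if k is k'.+1 then Ez k *m A *m Ez k' else 0).
Proof.
rewrite -{1}(mulmx1 (Ez k *m A)) -(Ezsum _ (leq_addr k.+2 n)).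
rewrite mulmx_sumr (sum3 (fun j => Ez k *m A *m Ez j) k) //; first lia.
by move=> j hj; apply: Eztri; rewrite orbC.
Qed.

Lemma Ezv k : Ez k *m vv k = vv k.
Proof. by case: k => [|k] /=; rewrite ?EzE ?eqxx // !mulmxA EzE eqxx. Qed.

Lemma wEz k : ww k *m Ez k = ww k.
Proof. by case: k => [|k] /=; rewrite ?EzE ?eqxx // -!mulmxA EzE eqxx. Qed.

Lemma trx k' : \tr (Ez k' *m A *m Ez k'.+1 *m A) = xx k'.+1.
Proof. by rewrite /xx -mulmxA mxtrace_mulC !mulmxA. Qed.

Lemma vrec k : A *m vv k = vv k.+1 + aa k *: vv k + xx k *: vv k.-1.
Proof.
rewrite -{1}Ezv mulmxA AEz !mulmxDl; congr (_ + _ + _).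
- by rewrite -mulmxA Ezv.
- by rewrite Ezr1 -scalemxAl Ezv.
case: k => [|k']; first by rewrite mul0mx scale0r.
have r1 := Ezr1 k' (A *m Ez k'.+1 *m A); rewrite !mulmxA trx in r1.
rewrite [vv k'.+1]/= !mulmxA -(mulmxA _ (Ez k'.+1) (Ez k'.+1)) EzE eqxx.
by rewrite -(Ezv k') !mulmxA r1 -scalemxAl /= Ezv.
Qed.

Lemma wrec k : ww k *m A = ww k.+1 + aa k *: ww k + xx k *: ww k.-1.
Proof.
rewrite -{1}wEz -mulmxA EzA !mulmxDr; congr (_ + _ + _).
- by rewrite !mulmxA wEz.
- by rewrite Ezr1 -scalemxAr wEz.
case: k => [|k']; first by rewrite mulmx0 scale0r.
have r1 := Ezr1 k' (A *m Ez k'.+1 *m A); rewrite !mulmxA trx in r1.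
rewrite [ww k'.+1]/= !mulmxA -(mulmxA _ (Ez k'.+1) (Ez k'.+1)) EzE eqxx.
rewrite -{1}(wEz k') -!mulmxA; rewrite -!mulmxA in r1; by rewrite r1 -scalemxAr wEz.
Qed.

Lemma vwprod k : vv k *m ww k = (\prod_(1 <= j < k.+1) xx j) *: Ez k.
Proof.
elim: k => [|k IH]; first by rewrite big_geq //= EzE eqxx scale1r.
rewrite /= !mulmxA -(mulmxA _ (vv k)) IH -scalemxAr -scalemxAl.
have r1 := Ezr1 k.+1 (A *m Ez k *m A); rewrite !mulmxA in r1.
by rewrite -scalemxAl r1 scalerA [in RHS]big_nat_recr.
Qed.

Lemma hv k : horner_mx A (ppair aa xx k).2 *m Ez 0 = vv k /\
  horner_mx A (ppair aa xx k).1 *m Ez 0 = (if k is k'.+1 then vv k' else 0).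
Proof.
elim: k => [|k [IH2 IH1]] /=; first by rewrite rmorph1 rmorph0 mul1mx mul0mx.
split => //.
rewrite rmorphB rmorphM /= horner_mxZ rmorphB /= horner_mx_X horner_mx_C.
rewrite -[Ez k.+1 *m A *m vv k]/(vv k.+1) mulmxBl -mulmxE -mulmxA IH2 -scalemxAl IH1 mulmxBl vrec mul_scalar_mx.
case: k {IH1 IH2} => [|k]; first by rewrite !scale0r !subr0 addr0 addrK.
by rewrite addrAC !addrK.
Qed.

Lemma hw k : Ez 0 *m horner_mx A (ppair aa xx k).2 = ww k /\
  Ez 0 *m horner_mx A (ppair aa xx k).1 = (if k is k'.+1 then ww k' else 0).
Proof.
elim: k => [|k [IH2 IH1]] /=; first by rewrite rmorph1 rmorph0 mulmx1 mulmx0.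
split => //.
rewrite mulrC rmorphB rmorphM /= horner_mxZ rmorphB /= horner_mx_X horner_mx_C.
rewrite -[ww k *m A *m Ez k.+1]/(ww k.+1) mulmxBr -mulmxE mulmxA IH2 -scalemxAr IH1 mulmxBr wrec mul_mx_scalar.
case: k {IH1 IH2} => [|k]; first by rewrite !scale0r !subr0 addr0 addrK.
by rewrite addrAC !addrK.
Qed.

Lemma main_abs k : horner_mx A (ppair aa xx k).2 *m Ez 0 *m horner_mx A (ppair aa xx k).2
   = (\prod_(1 <= j < k.+1) xx j) *: Ez k.
Proof.
have [h1 _] := hv k; have [h2 _] := hw k.
have e0 : Ez 0 *m Ez 0 = Ez 0 by rewrite EzE.
by rewrite -e0 mulmxA h1 -mulmxA h2 vwprod.
Qed.
End Abstract.

Arguments aa {K d} A Ez k.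
Arguments xx {K d} A Ez k.
Arguments fac_r1 {K d E} X {u r}.
Arguments fac_xnz {K d E F X u u' r r'}.
Arguments main_abs {K d A Ez}.

Lemma ppair_ext (K : fieldType) (a x a' x' : nat -> K) k :
  (forall j, (j < k)%N -> a j = a' j /\ x j = x' j) -> ppair a x k = ppair a' x' k.
Proof.
elim: k => [//|k IH] h /=.
rewrite IH; last by move=> j hj; apply: h; rewrite ltnS ltnW.
by have [-> ->] := h k (ltnSn k).
Qed.

Theorem lemma8p6 (K : fieldType) (d : nat) (A As : 'M[K]_d.+1)
  (E Es : 'I_d.+1 -> 'M[K]_d.+1) :
  leonard_system A As E Es ->
  forall i : 'I_d.+1,
    (\prod_(1 <= k < i.+1) LS_x A Es k != 0) /\
    Es i = (\prod_(1 <= k < i.+1) LS_x A Es k)^-1 *: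
             (horner_mx A (LS_p A Es i) *m Es ord0 *m horner_mx A (LS_p A Es i)).
Proof.
move=> [_ [_ [_ [[th [thinj [theig EsE]]] [_ triEs]]]]] i.
pose Ez k := if (k < d.+1)%N then Es (inord k) else 0.
have EzP : forall k, (k < d.+1)%N -> Ez k = prim_idem As th (inord k).
  by move=> k hk; rewrite /Ez hk EsE.
have EzE : forall j k, Ez j *m Ez k = if j == k then Ez k else 0.
  move=> j k; case: (ltnP j d.+1) => hj; case: (ltnP k d.+1) => hk.
  - rewrite !EzP // idem_mul //.
    have -> : (inord j == inord k :> 'I_d.+1) = (j == k) by rewrite -val_eqE /= !inordK.
    by case: eqP => // ->.
  - rewrite /Ez hj (ltnNge k) hk /= mulmx0; by case: (j == k).
  - rewrite /Ez hk (ltnNge j) hj /= mul0mx; case: eqP => // ejk.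
    by subst; lia.
  - by rewrite /Ez (ltnNge j) (ltnNge k) hj hk /= mul0mx; case: (j == k).
have Ezsum : forall N, (d.+1 <= N)%N -> \sum_(j < N) Ez j = 1%:M.
  move=> N hN; rewrite -(big_mkord xpredT) (@big_cat_nat _ _ _ d.+1) //=.
  have -> : \sum_(d.+1 <= j < N) Ez j = 0.
    rewrite big_nat_cond big1 // => j; rewrite andbT => /andP[hj _].
    by rewrite /Ez (ltnNge j) hj.
  rewrite addr0 big_mkord; transitivity (\sum_(j < d.+1) prim_idem As th j).
    apply: eq_bigr => j _.
    by rewrite EzP // inord_val.
  exact: (@idem_sum _ _ As th thinj).
have Eztri : forall j k, (k.+1 < j)%N || (j.+1 < k)%N -> Ez j *m A *m Ez k = 0.
  move=> j k hjk; case: (ltnP j d.+1) => hj; last by rewrite /Ez (ltnNge j) hj /= !mul0mx.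
  case: (ltnP k d.+1) => hk; last by rewrite /Ez (ltnNge k) hk /= mulmx0.
  rewrite /Ez hj hk; have [h _] := triEs (inord j) (inord k).
  by apply: h; rewrite !inordK // orbC.
have fac : forall k, (k < d.+1)%N ->
    exists u : 'cV[K]_d.+1, exists r : 'rV[K]_d.+1, Ez k = u *m r /\ r *m u = 1%:M.
  move=> k hk; rewrite (EzP k hk); apply: rank1_fac.
    by rewrite idem_mul // eqxx.
  exact: idem_rank.
have Ezr1 : forall k X, Ez k *m X *m Ez k = \tr (Ez k *m X) *: Ez k.
  move=> k X; case: (ltnP k d.+1) => hk.
    have [u [r [e ru]]] := fac k hk; exact (fac_r1 X e ru).
  by rewrite /Ez (ltnNge k) hk /= !mul0mx scaler0.
have eqa : forall j, (j < d.+1)%N -> LS_a A Es j = aa A Ez j.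
  by move=> j hj; rewrite /LS_a /aa /Ez hj.
have eqx : forall j, (j < d.+1)%N -> LS_x A Es j = xx A Ez j.
  by case=> // j hj; rewrite /LS_x /xx /Ez hj (ltnW hj).
have hp : LS_p A Es i = (ppair (aa A Ez) (xx A Ez) i).2.
  rewrite /LS_p (@ppair_ext _ _ _ (aa A Ez) (xx A Ez)) // => j hj.
  have hj' : (j < d.+1)%N by apply: ltn_trans hj (ltn_ord i).
  by split; [apply: eqa | apply: eqx].
have hprod : \prod_(1 <= k < i.+1) LS_x A Es k = \prod_(1 <= k < i.+1) xx A Ez k.
  by apply: eq_big_nat => k /andP[_ hk]; apply: eqx; apply: leq_trans hk (ltn_ord i).
have hEsi : Es i = Ez i by rewrite /Ez ltn_ord inord_val.
have hEs0 : Es ord0 = Ez 0%N.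
  by rewrite /Ez /=; congr (Es _); apply: val_inj; rewrite /= inordK.
have xnz : forall j, (0 < j)%N -> (j < d.+1)%N -> xx A Ez j != 0.
  case=> // j _ hj.
  have [u [r [e ru]]] := fac j.+1 hj.
  have [u' [r' [e' ru']]] := fac j (ltnW hj).
  apply: (fac_xnz e ru e' ru').
    rewrite /Ez hj (ltnW hj); have [_ h] := triEs (inord j.+1) (inord j).
    by apply: h; rewrite !inordK ?(ltnW hj) // eqxx orbT.
  rewrite /Ez hj (ltnW hj); have [_ h] := triEs (inord j) (inord j.+1).
  by apply: h; rewrite !inordK ?(ltnW hj) // eqxx.
have nz : \prod_(1 <= k < i.+1) LS_x A Es k != 0.
  rewrite hprod prodf_seq_neq0; apply/allP => k; rewrite mem_index_iota => /andP[h1 h2].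
  by apply/implyP => _; apply: xnz => //; apply: leq_trans h2 (ltn_ord i).
split => //.
rewrite hp hEsi hEs0 (main_abs EzE Ezsum Eztri Ezr1) -hprod scalerA mulVf ?scale1r //.
Qed.
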